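(* Let $g:(0,\infty)\times[0,\infty)\to\mathbb{R}$ be non-decreasing in the second variable, and assume that for some $t_0$, $S=\sup_{t>t_0,\,h,k>0}|g(t,h+k)-g(t+h,k)-g(t,h)|<\infty$. Then for any sequence $t_n\to\infty$, $$\limsup_{h\to+\infty}\limsup_{n}\frac{g(t_n,h)}{h}\le\limsup_{h\to+\infty}\limsup_{t\to+\infty}\frac{g(t,h)}{h}.$$ Moreover, for every $\kappa>0$ there is a sequence $\bar t_n\to\infty$ such that $$\limsup_{h\to+\infty}\limsup_{t\to+\infty}\frac{g(t,h)}{h}\le\liminf_{h\to+\infty}\liminf_{n}\frac{g(\bar t_n,h)}{h}+\frac{2S}{\kappa}.$$ *)

(* Defs.v *)
From HB Require Import structures.
From mathcomp Require Import all_boot all_order all_algebra.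
From mathcomp Require Import all_classical all_reals all_analysis.
Set Implicit Arguments. Unset Strict Implicit. Unset Printing Implicit Defensive.
Import Order.TTheory GRing.Theory Num.Theory.
Import numFieldNormedType.Exports.
Local Open Scope classical_set_scope.
Local Open Scope ring_scope.

Definition cocycle_defect_sup (R : realType) (g : R -> R -> R) (t0 : R) : \bar R :=
  ereal_sup [set (`| g x.1.1 (x.1.2 + x.2) - g (x.1.1 + x.1.2) x.2 - g x.1.1 x.1.2 |)%:E
            | x in [set x : R * R * R | t0 < x.1.1 /\ 0 < x.1.2 /\ 0 < x.2]].

(* Main.v *)
Require Import Defs.
From HB Require Import structures.
From mathcomp Require Import all_boot all_order all_algebra.
From mathcomp Require Import all_classical all_reals all_analysis.
From mathcomp Require Import ring lra.
Import Order.TTheory GRing.Theory Num.Theory.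
Import numFieldNormedType.Exports.
Local Open Scope classical_set_scope.
Local Open Scope ring_scope.

Section Gen.
Variable R : realType.
Local Open Scope ereal_scope.

Lemma ereal_le_of_real (L X : \bar R) :
  (forall a : R, a%:E < L -> a%:E <= X) -> L <= X.
Proof.
case: L => [l| |] H; last by rewrite leNye.
- apply/lee_subgt0Pr => e e0; rewrite -EFinB; apply: H.
  by rewrite lte_fin gtrDl oppr_lt0.
- case: X H => [x| |] H //.
  + have := H (x + 1)%R (ltry _); by rewrite lee_fin gerDl ler10.
  + by have := H 0%R (ltry _).
Qed.

Lemma limf_esup_gt (T0 : choiceType) (T : filteredType T0) (F : set_system T) (f : T -> \bar R) (x : \bar R) V :
  x < limf_esup f F -> F V -> exists2 t, V t & x < f t.
Proof.
rewrite limf_esupE => H FV.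
have : x < ereal_sup (f @` V).
  apply: (lt_le_trans H); apply: ereal_inf_lbound; by exists V.
by case/ereal_sup_gt => y [t Vt <-] xy; exists t.
Qed.

Lemma limf_einf_ge (T0 : choiceType) (T : filteredType T0) (F : set_system T) (f : T -> \bar R) (a : \bar R) :
  F [set t | a <= f t] -> a <= limf_einf f F.
Proof.
move=> FV; rewrite limf_einfE.
apply: (@le_trans _ _ (ereal_inf (f @` [set t | a <= f t]))).
  by apply: le_ereal_inf_tmp => y [t Vt <-].
by apply: ereal_sup_ubound; exists [set t | a <= f t].
Qed.

Lemma limf_esup_le_pw (T0 : choiceType) (T : filteredType T0) (F : set_system T) (f f' : T -> \bar R) :
  (forall t, f t <= f' t) -> limf_esup f F <= limf_esup f' F.
Proof.
move=> ff'; rewrite !limf_esupE; apply: le_ereal_inf_tmp => y [V FV <-].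
apply: (@le_trans _ _ (ereal_sup (f @` V))).
  by apply: ereal_inf_lbound; exists V.
apply: ge_ereal_sup => z [t Vt <-]; apply: (le_trans (ff' t)).
by apply: ereal_sup_ubound; exists t.
Qed.

Lemma limf_esup_comp (T0 U0 : choiceType) (T : filteredType T0) (U : filteredType U0) (F : set_system T) (G : set_system U) (u : U -> T)
  (f : T -> \bar R) : (u @ G --> F) -> limf_esup (f \o u) G <= limf_esup f F.
Proof.
move=> uGF; rewrite !limf_esupE; apply: le_ereal_inf_tmp => y [V FV <-].
have GW : G (u @^-1` V) by apply: uGF.
apply: (@le_trans _ _ (ereal_sup ((f \o u) @` (u @^-1` V)))).
  by apply: ereal_inf_lbound; exists (u @^-1` V).
apply: ge_ereal_sup => z [t Vt <-]; apply: ereal_sup_ubound; by exists (u t).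
Qed.

End Gen.
Arguments limf_esup_gt {R T0 T F f x V}.
Arguments limf_einf_ge {R T0 T F f a}.
Arguments limf_esup_le_pw {R T0 T F f f'}.
Arguments limf_esup_comp {R T0 U0 T U F G u f}.
Arguments ereal_le_of_real {R L X}.

Section Main.
Variables (R : realType) (g : R -> R -> R) (t0 S : R).
Hypothesis ht0 : 0 <= t0.
Hypothesis hmono : forall t h k : R, 0 < t -> 0 <= h -> h <= k -> g t h <= g t k.
Hypothesis hS : cocycle_defect_sup g t0 = S%:E.

Lemma cocyc {t h k} : t0 < t -> 0 < h -> 0 < k ->
  `| g t (h + k) - g (t + h) k - g t h | <= S.
Proof.
move=> ht hh kk; rewrite -lee_fin -hS; apply: ereal_sup_ubound.
by exists ((t, h), k).
Qed.

Lemma cocycU {t h k} : t0 < t -> 0 < h -> 0 < k ->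
  g t (h + k) <= g (t + h) k + g t h + S.
Proof. move=> ht hh kk; have := cocyc ht hh kk; rewrite ler_norml; lra. Qed.

Lemma cocycL {t h k} : t0 < t -> 0 < h -> 0 < k ->
  g t (h + k) - g t h - S <= g (t + h) k.
Proof. move=> ht hh kk; have := cocyc ht hh kk; rewrite ler_norml; lra. Qed.

Lemma Sge0 : 0 <= S.
Proof.
apply: le_trans (cocyc (t := t0 + 1) (h := 1) (k := 1) _ _ _) => //.
by rewrite ltrDl.
Qed.

Lemma Ubound {h0 C t1} : 0 < h0 -> (forall t, t1 <= t -> g t h0 <= C) ->
  forall N, exists U t2, [/\ t0 < t2, 0 < t2 &
    forall t h, t2 <= t -> 0 <= h -> h <= N -> g t h <= U].
Proof.
move=> h00 hC N.
pose t2 := Num.max t1 (t0 + 1).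
have t2t1 : t1 <= t2 by rewrite le_max lexx.
have t2t0 : t0 < t2 by rewrite lt_max ltrDl ltr01 orbT.
have t2p : 0 < t2 by apply: le_lt_trans t2t0.
have Hk : forall k : nat, forall t, t2 <= t -> g t (k.+1%:R * h0) <= k.+1%:R * (C + S).
  elim=> [|k IH] t tt2.
    by rewrite !mul1r; have := hC t (le_trans t2t1 tt2); have := Sge0; lra.
  have e : k.+2%:R * h0 = h0 + k.+1%:R * h0 by rewrite mulrSr mulrDl mul1r addrC.
  rewrite e.
  have kp : 0 < k.+1%:R * h0 by rewrite mulr_gt0 // ltr0n.
  have := cocycU (lt_le_trans t2t0 tt2) h00 kp.
  have th : t2 <= t + h0 by lra.
  have := IH (t + h0) th.
  have := hC t (le_trans t2t1 tt2).
  rewrite (mulrSr (1:R) k.+1) mulrDl mul1r.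
  lra.
pose k := Num.truncn (N / h0).
have Nk : N <= k.+1%:R * h0.
  have := truncnS_gt (N / h0); rewrite -/k ltr_pdivrMr // => /ltW //.
exists (k.+1%:R * (C + S)), t2; split => // t h ht2 h0le hN.
apply: le_trans (Hk k t ht2).
apply: hmono => //; first by apply: lt_le_trans ht2.
exact: le_trans Nk.
Qed.

Lemma argmin_nat (D : nat -> R) m : (1 <= m)%N ->
  exists i, [/\ (1 <= i)%N, (i <= m)%N &
    forall j, (1 <= j)%N -> (j <= m)%N -> D i <= D j].
Proof.
elim: m => [//|m IH] _.
case: m IH => [|m] IH.
  exists 1%N; split => // j j1 j2; have -> : j = 1%N by apply/eqP; rewrite eqn_leq j1 j2.
  by [].
have [i [i1 im Hi]] := IH isT.
have [le|lt] := leP (D i) (D m.+2).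
  exists i; split => //; first by apply: leq_trans im _.
  move=> j j1; rewrite leq_eqVlt => /orP [/eqP -> //|]; rewrite ltnS; exact: Hi.
exists m.+2; split => // j j1; rewrite leq_eqVlt => /orP [/eqP -> //|]; rewrite ltnS => jm.
exact: (ltW (lt_le_trans lt (Hi j j1 jm))).
Qed.

Lemma key {a b N M U t2 : R} : b < a -> 1 <= N -> t0 < t2 -> 0 < t2 ->
  (forall t h, t2 <= t -> 0 <= h -> h <= N -> g t h <= U) ->
  (forall M, exists H t, [/\ M < H, M < t & a * H < g t H]) ->
  exists s, M <= s /\ forall h, 1 <= h -> h <= N -> b * h - 1 - S <= g s h.
Proof.
move=> ba N1 t2t0 t2p HU Hyp.
pose K := 2 * `|U| + `|S| + `|b| * N + 1.
pose M' := Num.max (Num.max M t2) (Num.max 1 (K / (a - b))).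
have [H [T [HM TM gTH]]] := Hyp M'.
have H1 : 1 < H by apply: le_lt_trans HM; rewrite !le_max lexx !orbT.
have TM0 : M <= T by apply: ltW; apply: le_lt_trans TM; rewrite !le_max lexx.
have Tt2 : t2 <= T by apply: ltW; apply: le_lt_trans TM; rewrite !le_max lexx !orbT.
have abp : 0 < a - b by rewrite subr_gt0.
have HK : K < (a - b) * H.
  have : K / (a - b) < H by apply: le_lt_trans HM; rewrite !le_max lexx !orbT.
  by rewrite ltr_pdivrMr // mulrC.
pose m := (Num.truncn (H * (`|b| + 1))).+1.
have mgt : H * (`|b| + 1) < m%:R by apply: truncnS_gt.
have m0 : (0 < m%:R :> R) by rewrite ltr0n.
pose d := H / m%:R.
have dp : 0 < d by rewrite divr_gt0 //; lra.
have md : m%:R * d = H by rewrite /d mulrC mulfVK // gt_eqF.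
have bd : `|b| * d < 1.
  have : (`|b| + 1) * d < 1.
    by rewrite /d mulrA ltr_pdivrMr // mul1r mulrC.
  have := normr_ge0 b; nra.
have d1 : d < 1 by have := normr_ge0 b; nra.
pose D (j : nat) := g T (j%:R * d) - b * (j%:R * d).
have [i [i1 im Hi]] := argmin_nat D m isT.
have Tt0 : t0 < T by apply: lt_le_trans Tt2.
have Tp : 0 < T by apply: lt_le_trans Tt2.
have i1R : (1 <= i%:R :> R) by rewrite ler1n.
have imR : (i%:R <= m%:R :> R) by rewrite ler_nat.
have idp : 0 < i%:R * d by rewrite mulr_gt0 //; lra.
have Nle : N <= (m%:R - i%:R) * d.
  rewrite leNgt; apply/negP => Nlt.
  have D1 : D m - D 1%N > K - `|U| - 1.
    rewrite /D md mul1r.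
    have : g T d <= U by apply: HU; lra.
    have := ler_norm U; have := ler_normlW (lexx `|b|); have := normr_ge0 b.
    have : - (`|b| * d) <= b * d.
      by rewrite -mulNr ler_wpM2r //; [lra | rewrite lerNnormlW].
    nra.
  have Dmi : D m - D i <= `|U| + `|S| + `|b| * N.
    have [eim | neim] := eqVneq i m.
      by rewrite eim subrr; have := normr_ge0 U; have := normr_ge0 S; have := normr_ge0 b; nra.
    have imlt : (i%:R < m%:R :> R) by rewrite ltr_nat ltn_neqAle neim im.
    have kp : 0 < (m%:R - i%:R) * d by rewrite mulr_gt0 //; lra.
    have := cocycU Tt0 idp kp.
    have e : i%:R * d + (m%:R - i%:R) * d = H by rewrite -md; ring.
    rewrite e.
    have : g (T + i%:R * d) ((m%:R - i%:R) * d) <= U by apply: HU; lra.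
    have : `|b * ((m%:R - i%:R) * d)| <= `|b| * N.
      by rewrite normrM ler_wpM2l // ger0_norm; lra.
    have bx : b * ((m%:R - i%:R) * d) = b * H - b * (i%:R * d).
      by rewrite -e; ring.
    rewrite /D md.
    have := ler_norm U; have := ler_norm S.
    have : - `|b * ((m%:R - i%:R) * d)| <= b * ((m%:R - i%:R) * d).
      by rewrite lerNnormlW.
    lra.
  have := Hi 1%N isT (leq_trans i1 im).
  move: D1; rewrite /K; lra.
exists (T + i%:R * d); split; first by lra.
move=> h h1 hN.
pose k := Num.truncn (h / d).
have hd0 : 0 <= h / d by rewrite divr_ge0 //; lra.
have [kle klt] := andP (truncn_itv hd0).
rewrite -/k in kle klt.
have kdle : k%:R * d <= h by rewrite -ler_pdivlMr.
have kdgt : h < k.+1%:R * d by rewrite -ltr_pdivrMr.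
have k1 : (1 <= k)%N.
  rewrite truncn_ge_nat // ler_pdivlMr // mul1r; lra.
have k1R : (1 <= k%:R :> R) by rewrite ler1n.
have kdp : 0 < k%:R * d by rewrite mulr_gt0 //; lra.
have jm : (i + k <= m)%N.
  rewrite -(ler_nat R) natrD.
  have : k%:R * d <= (m%:R - i%:R) * d by lra.
  by rewrite ler_pM2r //; lra.
have := Hi (i + k)%N (leq_trans i1 (leq_addr _ _)) jm.
rewrite /D natrD.
have := cocycL Tt0 idp kdp.
have e : i%:R * d + k%:R * d = (i%:R + k%:R) * d by ring.
rewrite e => c1 c2.
have mo : g (T + i%:R * d) (k%:R * d) <= g (T + i%:R * d) h.
  apply: hmono => //; lra.
have bk : b * h - 1 <= b * (k%:R * d).
  have kS : k.+1%:R * d = k%:R * d + d by rewrite -addn1 natrD mulrDl mul1r.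
  rewrite kS in kdgt.
  have [b0 | b0] := leP 0 b.
    have : b * d <= `|b| * d by rewrite ler_wpM2r //; [lra | exact: ler_norm].
    nra.
  nra.
lra.
Qed.


Lemma tb_cvg (tb : nat -> R) : (forall n, n%:R <= tb n) -> tb n @[n --> \oo] --> +oo.
Proof.
move=> Htb; apply/cvgryPge => A; exists (Num.truncn A).+1 => // n /= hn.
apply: le_trans (Htb n); apply/ltW/(lt_le_trans (truncnS_gt A)).
by rewrite ?ler_nat.
Qed.

Lemma pinfty_gt (M : R) : pinfty_nbhs R (fun x => M < x).
Proof. by exists M; split => //; rewrite num_real. Qed.

Lemma final (tb : nat -> R) (L : \bar R) :
  (forall a : R, (a%:E < L)%E -> exists h1, forall h, h1 < h -> exists n1,
     forall n, (n1 <= n)%N -> a <= g (tb n) h / h) ->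
  (L <= limf_einf (fun h => limn_einf (fun n => (g (tb n) h / h)%:E)) (pinfty_nbhs R))%E.
Proof.
move=> HL; apply: ereal_le_of_real => a aL.
have [h1 Hh1] := HL a aL.
apply: limf_einf_ge; exists h1; split; first by rewrite num_real.
move=> h hh1 /=; have [n1 Hn1] := Hh1 h hh1.
apply: limf_einf_ge; exists n1 => [//|n /= hn].
by rewrite lee_fin; apply: Hn1.
Qed.

Lemma between {x : R} {L : \bar R} : (x%:E < L)%E -> exists y : R, x < y /\ (y%:E < L)%E.
Proof.
case: L => [l| |] //.
  rewrite lte_fin => xl; exists ((x + l) / 2); rewrite lte_fin; split; lra.
by move=> _; exists (x + 1); split; [lra | exact: ltry].
Qed.

Lemma hypL {a : R} :
  (a%:E < limf_esup (fun h => limf_esup (fun t => (g t h / h)%:E) (pinfty_nbhs R)) (pinfty_nbhs R))%E ->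
  forall M, exists H t, [/\ M < H, M < t & a * H < g t H].
Proof.
move=> aL M.
have [H HM aH] := limf_esup_gt aL (pinfty_gt (Num.max M 0)).
have [t tM at_] := limf_esup_gt aH (pinfty_gt M).
have H0 : 0 < H by move: HM; rewrite /= gt_max => /andP [].
exists H, t; split => //; first by move: HM; rewrite /= gt_max => /andP [].
by move: at_; rewrite lte_fin ltr_pdivlMr.
Qed.


Let Lsup := limf_esup (fun h => limf_esup (fun t => (g t h / h)%:E) (pinfty_nbhs R)) (pinfty_nbhs R).
Let Xinf (tb : nat -> R) := limf_einf (fun h => limn_einf (fun n => (g (tb n) h / h)%:E)) (pinfty_nbhs R).

Lemma caseNA : ~ (exists h0 C t1, 0 < h0 /\ forall t, t1 <= t -> g t h0 <= C) ->
  exists tb, tb n @[n --> \oo] --> +oo /\ (Lsup <= Xinf tb)%E.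
Proof.
move=> nA.
have Hn : forall n : nat, exists t, n.+1%:R <= t /\ n%:R < g t 1.
  move=> n; apply/not_existsP => Hno; apply: nA.
  exists 1, n%:R, n.+1%:R; split => // t ht.
  rewrite leNgt; apply/negP => hlt; exact: (Hno t).
have [tb Htb] := boolp.choice Hn.
exists tb; split.
  apply: tb_cvg => n; have [h _] := Htb n; apply: le_trans h; rewrite ler_nat //.
apply: final => a _; exists 1 => h h1.
exists (Num.truncn (a * h)).+1 => n hn.
have [tbn gn] := Htb n.
have hp : 0 < h by lra.
rewrite ler_pdivlMr //.
have : a * h < n%:R.
  apply: (lt_le_trans (truncnS_gt _)); by rewrite ler_nat.
have : g (tb n) 1 <= g (tb n) h.
  apply: hmono => //; last by lra.
  by apply: lt_le_trans tbn; rewrite ltr0n.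
lra.
Qed.


Lemma caseA h0 C t1 : 0 < h0 -> (forall t, t1 <= t -> g t h0 <= C) ->
  exists tb, tb n @[n --> \oo] --> +oo /\ (Lsup <= Xinf tb)%E.
Proof.
move=> h00 hC.
have [LNy|LnNy] := eqVneq Lsup -oo%E.
  exists (fun n => n%:R); split; first by apply: tb_cvg.
  by rewrite LNy leNye.
have [b [Pb1 Pb2]] : exists b : nat -> R, (forall n, ((b n)%:E < Lsup)%E) /\
   (forall a, (a%:E < Lsup)%E -> exists n1, forall n, (n1 <= n)%N -> a < b n).
  move: LnNy; case: Lsup => [l| |] // _.
    exists (fun n => l - (n.+1%:R)^-1); split.
      by move=> n; rewrite lte_fin gtrDl oppr_lt0 invr_gt0 ltr0n.
    move=> a; rewrite lte_fin => al.
    exists (Num.truncn ((l - a)^-1)) => n hn.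
    have la0 : 0 < l - a by rewrite subr_gt0.
    have : (l - a)^-1 < n.+1%:R.
      apply: (lt_le_trans (truncnS_gt _)); by rewrite ler_nat ltnS.
    rewrite -[X in _ < X -> _]invrK ltf_pV2 ?posrE ?invr_gt0 ?ltr0n //.
    move: (n.+1%:R^-1) => x h; lra.
  exists (fun n => n%:R); split; first by move=> n; exact: ltry.
  move=> a _; exists (Num.truncn a).+1 => n hn.
  by apply: (lt_le_trans (truncnS_gt _)); rewrite ler_nat.
have Hn : forall n : nat, exists s, n%:R <= s /\
    forall h, 1 <= h -> h <= n.+1%:R -> b n * h - 1 - S <= g s h.
  move=> n; have [a [ba aL]] := between (Pb1 n).
  have [U [t2 [t2t0 t2p HU]]] := Ubound h00 hC n.+1%:R.
  apply: (key ba _ t2t0 t2p HU (hypL aL)).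
  by rewrite ler1n.
have [tb Htb] := boolp.choice Hn.
exists tb; split.
  by apply: tb_cvg => n; have [] := Htb n.
apply: final => a aL.
have [a' [aa' a'L]] := between aL.
have [n1 Hn1] := Pb2 a' a'L.
exists (Num.max 1 ((1 + S) / (a' - a))) => h.
rewrite gt_max => /andP [h1 hS1].
have hp : 0 < h by lra.
have aa0 : 0 < a' - a by rewrite subr_gt0.
move: hS1; rewrite ltr_pdivrMr // => hS1.
exists (maxn n1 (Num.truncn h)) => n hn.
have bn : a' < b n by apply: Hn1; apply: leq_trans hn; exact: leq_maxl.
have hle : h <= n.+1%:R.
  apply/ltW/(lt_le_trans (truncnS_gt _)); rewrite ler_nat ltnS.
  by apply: leq_trans hn; exact: leq_maxr.
have := (Htb n).2 h (ltW h1) hle.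
rewrite ler_pdivlMr //.
have : a' * h <= b n * h by rewrite ler_wpM2r //; lra.
move: hS1; rewrite mulrBr !(mulrC h).
lra.
Qed.

End Main.

Theorem proposition5p5 (R : realType) (g : R -> R -> R) (t0 S : R)
  (ht0 : 0 <= t0)
  (hmono : forall t h k : R, 0 < t -> 0 <= h -> h <= k -> g t h <= g t k)
  (hS : cocycle_defect_sup g t0 = S%:E) :
  (forall tn : R^nat, tn n @[n --> \oo] --> +oo ->
     (limf_esup (fun h => limn_esup (fun n => (g (tn n) h / h)%:E)) (pinfty_nbhs R)
      <= limf_esup (fun h => limf_esup (fun t => (g t h / h)%:E) (pinfty_nbhs R)) (pinfty_nbhs R))%E)
  /\
  (forall kappa : R, 0 < kappa ->
     exists tb : R^nat, tb n @[n --> \oo] --> +oo /\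
     (limf_esup (fun h => limf_esup (fun t => (g t h / h)%:E) (pinfty_nbhs R)) (pinfty_nbhs R)
      <= limf_einf (fun h => limn_einf (fun n => (g (tb n) h / h)%:E)) (pinfty_nbhs R)
         + (2 * S / kappa)%:E)%E).
Proof.
split.
  move=> tn htn; apply: limf_esup_le_pw => h.
  exact: (limf_esup_comp (f := fun t => (g t h / h)%:E) htn).
move=> kappa kp.
have [tb [tbc LX]] : exists tb : R^nat, tb n @[n --> \oo] --> +oo /\
     (limf_esup (fun h => limf_esup (fun t => (g t h / h)%:E) (pinfty_nbhs R)) (pinfty_nbhs R)
      <= limf_einf (fun h => limn_einf (fun n => (g (tb n) h / h)%:E)) (pinfty_nbhs R))%E.
  case: (pselect (exists h0 C t1, 0 < h0 /\ forall t, t1 <= t -> g t h0 <= C)).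
    move=> [h0 [C [t1 [h00 hC]]]]; eapply caseA; eauto.
  move=> nA; eapply caseNA; eauto.
exists tb; split => //.
apply: (le_trans LX); apply: lee_paddr => //.
rewrite lee_fin; apply: divr_ge0; last exact: ltW.
apply: mulr_ge0 => //; eapply Sge0; eauto.
Qed.
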